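(* Let $k\in\mathbb{N}$. For every finite set $A\subseteq\mathbb{N}$ with $\min(A)=0$ and $\max(A)\le k$ and $A\neq\{0,1,\ldots,k\}$, we have $d(A)<d(\{0,1,\ldots,k\})$. That is, $\{0,1,\ldots,k\}$ is the unique maximum of $d(\cdot)$ on the collection of sets $A\subseteq\mathbb{N}$ with $\min(A)=0$ and $\max(A)\le k$.
   Context: $\mathbb{N}=\{0,1,2,\ldots\}$. For $A,B\subseteq\mathbb{N}$ the sumset is $A+B=\{a+b: a\in A, b\in B\}$. For a nonempty finite set $C\subseteq\mathbb{N}$, a set $B\subseteq\mathbb{N}$ is an (additive) divisor of $C$ if there exists $D\subseteq\mathbb{N}$ with $B+D=C$; $d(C)$ denotes the number of distinct divisors of $C$. *)

(* Defs.v *)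
From mathcomp Require Import all_boot finmap.
From mathcomp Require Import boolp classical_sets cardinality.

Set Implicit Arguments.
Unset Strict Implicit.
Unset Printing Implicit Defensive.

Local Open Scope classical_set_scope.
Local Open Scope fset_scope.

Definition sumset (A B : set nat) : set nat :=
  [set (a + b)%N | a in A & b in B].

Definition fsetS (C : {fset nat}) : set nat := [set x | x \in C].

(* B is an additive divisor of C : there is D ⊆ ℕ (arbitrary) with B + D = C.
   Divisors of a nonempty finite C are automatically finite, so B ranges
   over finite sets of naturals. *)
Definition is_divisor (B : {fset nat}) (C : {fset nat}) : Prop :=
  exists D : set nat, sumset (fsetS B) D = fsetS C.

(* d(C) = number of distinct divisors of C (the set of divisors is finite,
   so fset_set enumerates it exactly). *)
Definition d (C : {fset nat}) : nat :=
  #|` fset_set [set B : {fset nat} | is_divisor B C] |.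

Definition interval0 (k : nat) : {fset nat} := [fset i | i in iota 0 k.+1].

(* Main.v *)
Require Import Defs.
From mathcomp Require Import all_boot finmap.
From mathcomp Require Import boolp classical_sets cardinality.
From mathcomp Require Import zify.
Set Implicit Arguments.
Unset Strict Implicit.
Local Open Scope fset_scope.
Local Open Scope classical_set_scope.

Lemma mem_int k x : (x \in interval0 k) = (x <= k)%N.
Proof. rewrite /interval0 !inE /= mem_iota; case: x => //= x; lia. Qed.

Lemma div_int k j (C : {fset nat}) : (j <= k)%N -> j \in C ->
  (forall z, z \in C -> z <= j)%N ->
  (forall y, y < j -> exists2 z, z \in C & z <= y <= z + (k - j))%N ->
  is_divisor C (interval0 k).
Proof.
move=> jk jC Cj cov; exists [set x | (x <= k - j)%N].
apply/seteqP; split => [y [a Ha [b Hb <-]]|y Hy].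
  rewrite /fsetS /= mem_int. rewrite /fsetS /= in Ha. have := Cj _ Ha. move: Hb => /=. lia.
rewrite /fsetS /= mem_int in Hy.
case: (ltnP y j) => yj.
  have [z zC /andP[z1 z2]] := cov _ yj.
  exists z => //; exists (y - z) => /=; lia.
exists j => //; exists (y - j) => /=; lia.
Qed.

Lemma div0 (B C : {fset nat}) D : 0 \in C -> sumset (fsetS B) D = fsetS C -> D 0 /\ 0 \in B.
Proof.
move=> C0 E; have : fsetS C 0 by [].
rewrite -E => -[b Hb [d Hd /eqP]]; rewrite addn_eq0 => /andP[/eqP b0 /eqP d0].
by subst.
Qed.

Lemma divsub (B C : {fset nat}) : 0 \in C -> is_divisor B C -> (B `<=` C)%fset.
Proof.
move=> C0 [D E]; have [D0 _] := div0 C0 E.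
apply/fsubsetP => b Hb; have : fsetS C (b + 0)%N by rewrite -E; exists b => //; exists 0.
by rewrite addn0.
Qed.

Lemma fin_div (C : {fset nat}) : 0 \in C -> finite_set [set B : {fset nat} | is_divisor B C].
Proof.
move=> C0; apply: sub_finite_set (finite_fset (fpowerset C)) => B HB.
by rewrite /= fpowersetE; apply: divsub.
Qed.

Definition mx (B : {fset nat}) := (\max_(b <- B) b)%N.

Lemma mx_mem_seq (s : seq nat) : s != [::] -> (\max_(i <- s) i)%N \in s.
Proof.
elim: s => [//|a s IH] _; rewrite big_cons inE.
case: (boolP (s == [::])) => [/eqP -> | sn].
  by rewrite big_nil maxn0 eqxx.
have : (\max_(i <- s) i)%N \in s.
  exact: IH.
case: (leqP (\max_(i <- s) i)%N a) => h.
  by rewrite eqxx.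
by move=> ->; rewrite orbT.
Qed.

Lemma mx_mem (B : {fset nat}) x : x \in B -> mx B \in B.
Proof. move=> xB; apply: mx_mem_seq; apply/eqP=> E; move: xB; rewrite -[x \in B]/(x \in enum_fset B) E //. Qed.

Lemma le_mx (B : {fset nat}) x : x \in B -> (x <= mx B)%N.
Proof. by move=> xB; rewrite /mx; apply: leq_bigmax_seq. Qed.

Definition phi (A B : {fset nat}) : {fset nat} :=
  (B `|` [fset x | x in iota 0 (mx B).+1 & x \notin A])%fset.

Lemma mem_phi A B x : (x \in phi A B) = (x \in B) || ((x <= mx B)%N && (x \notin A)).
Proof. by rewrite /phi !inE mem_iota /= add1n; case: x. Qed.

Lemma phi_div k A B : 0 \in A -> (forall a, a \in A -> a <= k)%N ->
  is_divisor B A -> is_divisor (phi A B) (interval0 k).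
Proof.
move=> A0 Ak HB; have BA := divsub A0 HB; have [D E] := HB.
have [D0 B0] := div0 A0 E.
have jB := mx_mem B0; have jA : mx B \in A := fsubsetP BA _ jB.
apply: (@div_int k (mx B)).
- exact: Ak.
- by rewrite mem_phi jB.
- by move=> z; rewrite mem_phi => /orP[/le_mx // | /andP[] //].
move=> y yj; case: (boolP (y \in A)) => yA; last first.
  by exists y; rewrite ?mem_phi ?yA ?andbT ?(ltnW yj) ?orbT // leqnn leq_addr.
have : fsetS A y by [].
rewrite -E => -[b Hb [d Hd bd]].
have : fsetS A (mx B + d)%N by rewrite -E; exists (mx B) => //; exists d.
move/Ak => jdk.
exists b; first by rewrite mem_phi Hb.
rewrite -bd; apply/andP; split; [exact: leq_addr | rewrite leq_add2l]; lia.
Qed.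

Lemma phi_inj A B1 B2 : 0 \in A -> is_divisor B1 A -> is_divisor B2 A ->
  phi A B1 = phi A B2 -> B1 = B2.
Proof.
move=> A0 H1 H2 E; have S1 := divsub A0 H1; have S2 := divsub A0 H2.
have key : forall B, (B `<=` A)%fset -> forall x, (x \in B) = (x \in A) && (x \in phi A B).
  move=> B SB x; rewrite mem_phi; case: (boolP (x \in B)) => xB /=.
    by rewrite (fsubsetP SB _ xB).
  by case: (x \in A); rewrite ?andbF.
by apply/fsetP => x; rewrite (key _ S1) (key _ S2) E.
Qed.

Lemma phi_miss k A B h : 0 \in A -> (forall a, a \in A -> a <= k)%N ->
  is_divisor B A -> h \notin A -> phi A B <> interval0 h.
Proof.
move=> A0 Ak HB hA E; have BA := divsub A0 HB; have [D E'] := HB.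
have [D0 B0] := div0 A0 E'.
have jB := mx_mem B0; have jA : mx B \in A := fsubsetP BA _ jB.
have : h \in phi A B by rewrite E mem_int.
rewrite mem_phi => /orP[hB|/andP[hj _]]; first by rewrite (fsubsetP BA _ hB) in hA.
have : mx B \in phi A B by rewrite mem_phi jB.
rewrite E mem_int => jh.
have /eqP hj' : h == mx B by rewrite eqn_leq hj jh.
by rewrite hj' jA in hA.
Qed.

Theorem mainTheorem1 (k : nat) (A : {fset nat}) :
  0 \in A ->
  (forall a, a \in A -> a <= k)%N ->
  A != interval0 k ->
  (d A < d (interval0 k))%N.
Proof.
move=> A0 Ak neqA.
have [h hk hA] : exists2 h, (h <= k)%N & h \notin A.
  case: (pselect (exists2 h, (h <= k)%N & h \notin A)) => [//|nh].
  exfalso; move/eqP: neqA; apply; apply/fsetP => x; rewrite mem_int.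
  apply/idP/idP => [/Ak //| xk]; apply/negPn/negP => xA; apply: nh; by exists x.
have I0 : 0 \in interval0 k by rewrite mem_int.
have finA := fin_div A0; have finK := fin_div I0.
rewrite /d.
set FA := fset_set _; set FK := fset_set _.
have inj : {in FA &, injective (phi A)}.
  move=> B1 B2; rewrite /FA !(in_fset_set finA) !inE => H1 H2; exact: phi_inj.
have <- : #|` [fset phi A B | B in FA]| = #|` FA| by apply/eqP/card_in_imfsetP.
apply: fproper_ltn_card.
rewrite fproperEneq; apply/andP; split.
  apply/negP => /eqP E.
  have : interval0 h \in FK.
    rewrite /FK (in_fset_set finK) inE; apply: (@div_int k h) => //.
    - by rewrite mem_int.
    - by move=> z; rewrite mem_int.
    - move=> y yh; exists y; rewrite ?mem_int ?leqnn ?leq_addr //; exact: ltnW.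
  rewrite -E => /imfsetP [B HB /esym].
  move: HB; rewrite /FA (in_fset_set finA) inE => HB; exact: (phi_miss A0 Ak HB hA).
apply/fsubsetP => x /imfsetP [B HB ->].
move: HB; rewrite /FK /FA (in_fset_set finK) (in_fset_set finA) !inE => HB.
exact: phi_div.
Qed.
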